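(* Let $G$ be an essentially $4$-edge-connected bipartite cubic graph with bipartition $(X,Y)$. Let $x\in X$ and $y\in Y$. Then $G-(N_G[x]\cup N_G[y])$ has a perfect matching.
   Context: $N_G[v]=\{v\}\cup N_G(v)$ is the closed neighborhood. A 3-connected cubic graph is essentially 4-edge-connected if every edge cut consisting of three edges $\{e_1,e_2,e_3\}$ induces $K_{1,3}$, i.e., the three edges are the three edges incident to a single vertex. *)

(* Defs.v *)
From mathcomp Require Import all_boot.
Set Implicit Arguments. Unset Strict Implicit. Unset Printing Implicit Defensive.

Section Graphs.
Variable V : finType.

Definition simple_graph (adj : rel V) : Prop :=
  symmetric adj /\ irreflexive adj.

Definition nbhd (adj : rel V) (v : V) : {set V} := [set u | adj v u].
Definition cnbhd (adj : rel V) (v : V) : {set V} := v |: nbhd adj v.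

Definition cubic (adj : rel V) : Prop := forall v, #|nbhd adj v| = 3.

Definition connected_on (adj : rel V) (W : {set V}) : Prop :=
  forall u v, u \in W -> v \in W ->
    connect [rel a b | [&& adj a b, a \in W & b \in W]] u v.

Definition k_connected (k : nat) (adj : rel V) : Prop :=
  k < #|V| /\ forall S : {set V}, #|S| < k -> connected_on adj (~: S).

Definition cut_size (adj : rel V) (S : {set V}) : nat :=
  #|[set p : V * V | [&& p.1 \in S, p.2 \notin S & adj p.1 p.2]]|.

Definition cut_is_star (adj : rel V) (S : {set V}) (v : V) : Prop :=
  forall a b, adj a b ->
    ((a \in S) && (b \notin S) || (b \in S) && (a \notin S)) = ((a == v) || (b == v)).

Definition ess_4_edge_connected (adj : rel V) : Prop :=
  k_connected 3 adj /\ cubic adj /\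
  forall S : {set V}, cut_size adj S = 3 -> exists v, cut_is_star adj S v.

Definition bipartition (adj : rel V) (X : {set V}) : Prop :=
  forall a b, adj a b -> (a \in X) != (b \in X).

Definition perfect_matching_on (adj : rel V) (W : {set V}) (M : {set {set V}}) : Prop :=
  (forall e, e \in M -> exists u v, [/\ e = [set u; v], u \in W, v \in W & adj u v])
  /\ (forall w, w \in W -> exists! e, e \in M /\ w \in e).

Definition has_perfect_matching_on (adj : rel V) (W : {set V}) : Prop :=
  exists M, perfect_matching_on adj W M.
End Graphs.

(* Main.v *)
Require Import Defs.
From mathcomp Require Import all_boot zify.
Set Implicit Arguments. Unset Strict Implicit. Unset Printing Implicit Defensive.

Lemma hall (T T' : finType) (d : T') (n : nat) (L : {set T}) (N : T -> {set T'}) :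
  #|L| <= n ->
  (forall S : {set T}, S \subset L -> #|S| <= #|\bigcup_(u in S) N u|) ->
  exists f : T -> T', {in L, forall u, f u \in N u} /\ {in L &, injective f}.
Proof.
elim: n L N => [|n IH] L N hL hH.
  exists (fun _ => d); move: hL; rewrite leqn0 cards_eq0 => /eqP ->.
  by split => u; rewrite in_set0.
case: (boolP [exists S : {set T}, [&& S \proper L, S != set0 & #|\bigcup_(u in S) N u| <= #|S|]]).
  case/existsP => S /and3P [pSL nS0 tight].
  have sSL := proper_sub pSL.
  have [f1 [f1N f1i]] : exists f1 : T -> T', {in S, forall u, f1 u \in N u} /\ {in S &, injective f1}.
    apply: (IH S N).
      have := proper_card pSL; lia.
    move=> S' sS'; apply: hH; exact: subset_trans sS' sSL.
  set NS := \bigcup_(u in S) N u.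
  have [f2 [f2N f2i]] : exists f2 : T -> T', {in L :\: S, forall u, f2 u \in N u :\: NS} /\ {in L :\: S &, injective f2}.
    apply: (IH (L :\: S) (fun u => N u :\: NS)).
      rewrite cardsD (setIidPr sSL); move: nS0; rewrite -card_gt0; lia.
    move=> T0 sT0.
    have dT0S : [disjoint T0 & S].
      rewrite disjoints_subset; apply: subset_trans sT0 _.
      by apply/subsetP => z; rewrite !inE => /andP [].
    have := hH (T0 :|: S); rewrite subUset sSL (subset_trans sT0 (subsetDl _ _)) => /(_ isT).
    rewrite cardsU (disjoint_setI0 dT0S) cards0.
    set U := \bigcup_(u in T0 :|: S) N u.
    have sNSU : NS \subset U.
      apply/subsetP => v /bigcupP [u uS vN]; apply/bigcupP; exists u => //.
      by rewrite inE uS orbT.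
    have sub : U :\: NS \subset \bigcup_(u in T0) (N u :\: NS).
      apply/subsetP => v; rewrite inE => /andP [vNS /bigcupP [u]].
      rewrite inE => /orP [uT0|uS] vN.
        by apply/bigcupP; exists u => //; rewrite inE vNS vN.
      by move/negP: vNS => []; apply/bigcupP; exists u.
    have := subset_leq_card sub; rewrite cardsD (setIidPr sNSU); move=> h1 h2; have := tight; rewrite -/NS; lia.
  exists (fun u => if u \in S then f1 u else f2 u); split.
    move=> u uL; case: ifP => uS; first exact: f1N.
    have: u \in L :\: S by rewrite inE uS uL.
    by move/f2N; rewrite inE => /andP [_ ->].
  move=> u v uL vL; case: ifP => uS; case: ifP => vS.
  - exact: f1i.
  - move=> e; have: f2 v \in N v :\: NS by apply: f2N; rewrite inE vS vL.
    by rewrite -e inE => /andP [/negP []]; apply/bigcupP; exists u => //; exact: f1N.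
  - move=> e; have: f2 u \in N u :\: NS by apply: f2N; rewrite inE uS uL.
    by rewrite e inE => /andP [/negP []]; apply/bigcupP; exists v => //; exact: f1N.
  - by apply: f2i; rewrite inE ?uS ?vS.
move=> hnt.
case: (set_0Vmem L) => [L0|[u uL]].
  by exists (fun _ => d); rewrite L0; split => ?; rewrite in_set0.
have := hH [set u]; rewrite sub1set uL big_set1 cards1 => /(_ isT).
rewrite card_gt0 => /set0Pn [v vN].
have [f2 [f2N f2i]] : exists f2 : T -> T', {in L :\ u, forall w, f2 w \in N w :\ v} /\ {in L :\ u &, injective f2}.
  apply: (IH (L :\ u) (fun w => N w :\ v)).
    have := cardsD1 u L; rewrite uL; lia.
  move=> T0 sT0; case: (set_0Vmem T0) => [->|[w wT0]]; first by rewrite cards0.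
  have pT0 : T0 \proper L.
    apply/properP; split; first by apply: subset_trans sT0 (subsetDl _ _).
    exists u => //; apply/negP => /(subsetP sT0); by rewrite !inE eqxx.
  have nT0 : T0 != set0 by apply/set0Pn; exists w.
  move: hnt => /existsPn /(_ T0); rewrite pT0 nT0 /= -ltnNge => hlt.
  set NT := \bigcup_(w in T0) N w.
  have sub : NT :\ v \subset \bigcup_(w in T0) (N w :\ v).
    apply/subsetP => z; rewrite inE => /andP [zv /bigcupP [w' wT' zN]].
    by apply/bigcupP; exists w' => //; rewrite inE zv zN.
  have := subset_leq_card sub; have := cardsD1 v NT; move: hlt; rewrite -/NT; case: (v \in NT); lia.
exists (fun w => if w == u then v else f2 w); split.
  move=> w wL; case: eqP => [->|/eqP wu] //.
  have: w \in L :\ u by rewrite in_setD1 wu wL.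
  by move/f2N; rewrite inE => /andP [_ ->].
move=> a b aL bL; case: eqP => [->|/eqP au]; case: eqP => [->|/eqP bu] //.
- move=> e; have: f2 b \in N b :\ v by apply: f2N; rewrite in_setD1 bu bL.
  by rewrite -e in_setD1 eqxx.
- move=> e; have: f2 a \in N a :\ v by apply: f2N; rewrite in_setD1 au aL.
  by rewrite e in_setD1 eqxx.
- by apply: f2i; rewrite in_setD1 ?au ?bu.
Qed.


Definition ecount (V : finType) (adj : rel V) (A B : {set V}) : nat :=
  \sum_(a in A) \sum_(b in B) (adj a b : nat).

Lemma ecount_sym (V : finType) (adj : rel V) (A B : {set V}) : symmetric adj ->
  ecount adj A B = ecount adj B A.
Proof.
move=> hs; rewrite /ecount exchange_big /=; apply: eq_bigr => b _.
by apply: eq_bigr => a _; rewrite hs.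
Qed.

Lemma ecountUr (V : finType) (adj : rel V) (A B1 B2 : {set V}) : [disjoint B1 & B2] ->
  ecount adj A (B1 :|: B2) = ecount adj A B1 + ecount adj A B2.
Proof.
move=> hd; rewrite /ecount -big_split /=; apply: eq_bigr => a _.
rewrite -bigU //; apply: eq_bigl => b; by rewrite !inE.
Qed.

Lemma ecountUl (V : finType) (adj : rel V) (A1 A2 B : {set V}) : [disjoint A1 & A2] ->
  ecount adj (A1 :|: A2) B = ecount adj A1 B + ecount adj A2 B.
Proof.
move=> hd; rewrite /ecount -bigU //; apply: eq_bigl => b; by rewrite !inE.
Qed.

Lemma ecountT (V : finType) (adj : rel V) (A : {set V}) : cubic adj ->
  ecount adj A setT = 3 * #|A|.
Proof.
move=> hc; rewrite /ecount (eq_bigr (fun _ => 3)); first by rewrite sum_nat_const mulnC.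
move=> a _.
rewrite -(hc a) /nbhd -sum1_card big_mkcond /= [RHS]big_mkcond /=.
by apply: eq_bigr => b _; rewrite !inE; case: (adj a b).
Qed.

Lemma cut_ecount (V : finType) (adj : rel V) (C : {set V}) :
  cut_size adj C = ecount adj C (~: C).
Proof.
pose F := fun a b => nat_of_bool [&& a \in C, b \notin C & adj a b].
have E : ecount adj C (~: C) = \sum_a \sum_b F a b.
  rewrite /ecount big_mkcond /=; apply: eq_bigr => a _.
  case aC: (a \in C).
    rewrite big_mkcond /=; apply: eq_bigr => b _.
    by rewrite /F aC inE; case: (b \in C).
  by rewrite big1 // => b _; rewrite /F aC.
rewrite E (pair_big xpredT xpredT F) /= /cut_size -sum1_card big_mkcond /=.
apply: eq_bigr => -[a b] _; rewrite /F inE /=.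
by case: [&& _, _ & _].
Qed.

Lemma closed_contra (V : finType) (adj : rel V) (C : {set V}) u w :
  k_connected 3 adj ->
  (forall a b, adj a b -> (a \in C) = (b \in C)) -> u \in C -> w \notin C -> False.
Proof.
case=> _ /(_ set0); rewrite cards0 => /(_ isT) hc hcl uC wC.
have := hc u w; rewrite !inE => /(_ isT isT) cuw.
have cl : closed [rel a b | [&& adj a b, a \in ~: set0 & b \in ~: set0]] C.
  by move=> a b /= /andP [ab _]; apply: hcl.
by have := closed_connect cl cuw; rewrite uC (negbTE wC).
Qed.

Lemma cut0_closed (V : finType) (adj : rel V) (C : {set V}) :
  symmetric adj -> cut_size adj C = 0 -> forall a b, adj a b -> (a \in C) = (b \in C).
Proof.
move=> hs /cards0_eq h0 a b ab.
have H : forall a b, adj a b -> a \in C -> b \in C.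
  move=> a' b' ab' aC; apply/negPn/negP => bC.
  have : (a', b') \in set0 by rewrite -h0 inE /= aC bC ab'.
  by rewrite in_set0.
apply/idP/idP; first exact: H.
by apply: H; rewrite hs.
Qed.

Lemma star_contra (V : finType) (adj : rel V) (C : {set V}) :
  ess_4_edge_connected adj -> cut_size adj C = 3 -> 2 <= #|C| -> 2 <= #|~: C| -> False.
Proof.
case=> hk [hc hst] h3 hC hCc; case: (hst C h3) => v hv.
case vC: (v \in C).
  have : 0 < #|C :\ v| by have := cardsD1 v C; rewrite vC; lia.
  rewrite card_gt0 => /set0Pn [u uC].
  apply: (closed_contra (C := C :\ v) (u := u) (w := v) hk) => //; last by rewrite !inE eqxx.
  move=> a b ab; have := hv a b ab; rewrite !in_setD1.
  case: (eqVneq a v) => [->|av]; case: (eqVneq b v) => [->|bv] //=; rewrite ?vC /=.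
  - by case: (b \in C).
  - by case: (a \in C).
  - by case: (a \in C); case: (b \in C).
have : 0 < #|~: C :\ v| by have := cardsD1 v (~: C); rewrite inE vC; lia.
rewrite card_gt0 => /set0Pn [w].
rewrite in_setD1 inE => /andP [wv wC].
apply: (closed_contra (C := v |: C) (u := v) (w := w) hk); last first.
- by rewrite in_setU1 (negbTE wv) (negbTE wC).
- by rewrite in_setU1 eqxx.
move=> a b ab; have := hv a b ab; rewrite !in_setU1.
case: (eqVneq a v) => [->|av]; case: (eqVneq b v) => [->|bv] //=; rewrite ?vC /=.
- by case: (b \in C).
- by case: (a \in C).
- by case: (a \in C); case: (b \in C).
Qed.

Lemma hall_cond (V : finType) (adj : rel V) (X : {set V}) (x y : V) (S : {set V}) :
  simple_graph adj -> ess_4_edge_connected adj -> bipartition adj X ->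
  x \in X -> y \notin X ->
  S \subset X :&: ~: (cnbhd adj x :|: cnbhd adj y) ->
  #|S| <= #|\bigcup_(u in S) (nbhd adj u :&: ~: (cnbhd adj x :|: cnbhd adj y))|.
Proof.
move=> [hs hirr] he4 hb hx hy sS.
have he4' := he4; case: he4' => hk [hc _].
have in_n : forall a b, (b \in nbhd adj a) = adj a b by move=> a b; rewrite /nbhd inE.
set W := ~: (cnbhd adj x :|: cnbhd adj y).
have memW : forall u, (u \in W) = [&& u != x, ~~ adj x u, u != y & ~~ adj y u].
  by move=> u; rewrite /W !inE ?in_n !negb_or -!andbA.
have bip : forall a b, adj a b -> (a \in X) = ~~ (b \in X).
  by move=> a b /hb; case: (a \in X); case: (b \in X).
rewrite leqNgt; apply/negP => hlt.
set B := \bigcup_(u in S) (nbhd adj u :&: W).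
have hS : forall u, u \in S -> (u \in X) && (u \in W).
  by move=> u /(subsetP sS); rewrite inE.
have hB : forall b, b \in B -> [/\ b \in W, b \notin X & exists2 u, u \in S & adj u b].
  move=> b /bigcupP [u uS]; rewrite inE ?in_n => /andP [ub bW]; split => //.
    by have := hS u uS => /andP [uX _]; move: uX; rewrite (bip _ _ ub).
  by exists u.
set C := S :|: B :|: cnbhd adj x.
have xS : x \notin S by apply/negP => /hS /andP [_]; rewrite memW eqxx.
have CX : C :&: X = x |: S.
  apply/setP => u; rewrite /C !inE ?in_n; apply/idP/idP.
    case/andP => /orP [/orP [uS|uB]|/orP [ux|xu]] uX.
    - by rewrite uS orbT.
    - by have [_ /negP] := hB u uB.
    - by rewrite ux.
    - by move: hx; rewrite (bip _ _ xu) uX.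
  case/orP => [/eqP ->|uS]; first by rewrite hx eqxx !orbT.
  by rewrite uS; have := hS u uS => /andP [-> _].
have CY : C :\: X = B :|: nbhd adj x.
  apply/setP => u; rewrite /C !inE ?in_n; apply/idP/idP.
    case/andP => uX /orP [/orP [uS|uB]|/orP [ux|xu]].
    - by have := hS u uS => /andP [uX' _]; rewrite uX' in uX.
    - by rewrite uB.
    - by move/eqP: ux uX => ->; rewrite hx.
    - by rewrite xu orbT.
  case/orP => [uB|xu].
    by have [_ -> _] := hB u uB; rewrite uB orbT.
  by move: hx; rewrite (bip _ _ xu) => ->; rewrite xu !orbT.
have cardCX : #|C :&: X| = #|S| + 1 by rewrite CX cardsU1 xS addnC.
have dBN : [disjoint B & nbhd adj x].
  rewrite -setI_eq0; apply/eqP/setP => u; rewrite !inE ?in_n.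
  case uB: (u \in B) => //=; have [uW _ _] := hB u uB.
  by move: uW; rewrite memW => /and4P [_ /negbTE -> _ _].
have cardCY : #|C :\: X| = #|B| + 3.
  by rewrite CY cardsU (disjoint_setI0 dBN) cards0 hc subn0.
have closedX : forall a b, a \in C :&: X -> adj a b -> b \in C.
  move=> a b; rewrite CX in_setU1 => /orP [/eqP ->|aS] ab.
    by rewrite /C !inE ?in_n ab !orbT.
  case bW: (b \in W).
    rewrite /C !inE ?in_n; apply/orP; left; apply/orP; right.
    by apply/bigcupP; exists a => //; rewrite inE ?in_n ab bW.
  move: bW; rewrite memW => /negbT; rewrite !negb_and !negbK => /or4P [bx|xb|byy|yb].
  - by rewrite /C !inE ?in_n bx !orbT.
  - by rewrite /C !inE ?in_n xb !orbT.
  - move/eqP: byy ab => -> ay; have := hS a aS => /andP [_].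
    by rewrite memW (hs y a) ay !andbF.
  - have := hS a aS => /andP [aX _].
    by move: aX; rewrite (bip _ _ ab) -(negbK (b \in X)) -(bip _ _ yb) (negbTE hy).
have dC : [disjoint C & ~: C] by rewrite disjoints_subset setCK subxx.
have dXY : [disjoint C :&: X & C :\: X].
  rewrite disjoints_subset; apply/subsetP => u; rewrite !inE ?in_n.
  by case/andP => _ ->.
have CU : C :&: X :|: C :\: X = C := setID C X.
have e0 : ecount adj (C :&: X) (~: C) = 0.
  rewrite /ecount big1 // => a aCX; rewrite big1 // => b; rewrite inE ?in_n => bC.
  by case ab: (adj a b) => //; rewrite (closedX a b aCX ab) in bC.
have eXX : ecount adj (C :&: X) (C :&: X) = 0.
  rewrite /ecount big1 // => a; rewrite inE ?in_n => /andP [_ aX]; rewrite big1 // => b.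
  rewrite inE ?in_n => /andP [_ bX].
  by case ab: (adj a b) => //; move: aX; rewrite (bip _ _ ab) bX.
have eYY : ecount adj (C :\: X) (C :\: X) = 0.
  rewrite /ecount big1 // => a; rewrite inE ?in_n => /andP [aX _]; rewrite big1 // => b.
  rewrite inE ?in_n => /andP [bX _].
  by case ab: (adj a b) => //; move: aX; rewrite (bip _ _ ab) bX.
have hcut : cut_size adj C = ecount adj (C :\: X) (~: C).
  by rewrite cut_ecount -{1}CU ecountUl // e0.
have hT : forall A, ecount adj A setT = ecount adj A C + ecount adj A (~: C).
  by move=> A; rewrite -(setUCr C) ecountUr.
have hCs : forall A, ecount adj A C = ecount adj A (C :&: X) + ecount adj A (C :\: X).
  by move=> A; rewrite -{1}CU ecountUr.
have E1 := hT (C :\: X); rewrite ecountT // hCs eYY cardCY -hcut in E1.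
have E2 := hT (C :&: X); rewrite ecountT // hCs eXX e0 cardCX in E2.
rewrite (ecount_sym _ _ hs) in E1.
move: hlt; rewrite -/B => hlt.
have h03 : cut_size adj C = 0 \/ cut_size adj C = 3 by lia.
have sD : nbhd adj y :\ x \subset ~: C.
  apply/subsetP => d; rewrite in_setD1 inE => /andP [dx yd].
  have dX : d \in X by move: hy; rewrite (bip _ _ yd) negbK.
  rewrite inE; apply/negP => dC'.
  have : d \in C :&: X by rewrite inE ?in_n dC' dX.
  rewrite CX in_setU1 (negbTE dx) /= => /hS /andP [_].
  by rewrite memW yd !andbF.
have cD : 2 <= #|nbhd adj y :\ x| by have := cardsD1 x (nbhd adj y); rewrite hc; case: (x \in _); lia.
have cCc : 2 <= #|~: C| by apply: leq_trans cD (subset_leq_card sD).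
have cC : 2 <= #|C| by rewrite -(cardsID X C) cardCX cardCY; lia.
case: h03 => [h0|h3]; last exact: (star_contra he4 h3 cC cCc).
have : 0 < #|nbhd adj y :\ x| by lia.
rewrite card_gt0 => /set0Pn [d dD].
apply: (closed_contra (C := C) (u := x) (w := d) hk (cut0_closed hs h0)).
  by rewrite /C !inE ?in_n eqxx !orbT.
by have := subsetP sD d dD; rewrite inE.
Qed.

Unset Implicit Arguments.

Theorem lemma2p12 (V : finType) (adj : rel V) (X : {set V}) (x y : V) :
  simple_graph adj ->
  ess_4_edge_connected adj ->
  bipartition adj X ->
  x \in X -> y \in ~: X ->
  has_perfect_matching_on adj (~: (cnbhd adj x :|: cnbhd adj y)).
Proof.
move=> hsg he4 hb hx hy.
have hy' : y \notin X by rewrite inE in hy.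
have [hs hirr] := hsg.
have in_n : forall a b, (b \in nbhd adj a) = adj a b by move=> a b; rewrite /nbhd inE.
have bip : forall a b, adj a b -> (a \in X) = ~~ (b \in X).
  by move=> a b /hb; case: (a \in X); case: (b \in X).
have hbC : bipartition adj (~: X).
  by move=> a b /hb; rewrite !inE; case: (a \in X); case: (b \in X).
set W := ~: (cnbhd adj x :|: cnbhd adj y).
have [f [fN fi]] := hall x (leqnn #|X :&: W|)
   (fun S sS => hall_cond hsg he4 hb hx hy' sS).
have hcY : forall S : {set V}, S \subset ~: X :&: W ->
    #|S| <= #|\bigcup_(u in S) (nbhd adj u :&: W)|.
  move=> S; rewrite /W setUC => sS.
  by apply: (hall_cond hsg he4 hbC hy _ sS); rewrite inE negbK.
have [g [gN gi]] := hall x (leqnn #|~: X :&: W|) hcY.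
have fL : f @: (X :&: W) \subset ~: X :&: W.
  apply/subsetP => v /imsetP [u uL ->].
  have := fN u uL; rewrite !inE ?in_n => /andP [ufu fuW].
  move: uL; rewrite inE => /andP [uX _].
  by rewrite fuW andbT -(bip _ _ ufu).
have gL : g @: (~: X :&: W) \subset X :&: W.
  apply/subsetP => v /imsetP [u uL ->].
  have := gN u uL; rewrite !inE ?in_n => /andP [ugu guW].
  move: uL; rewrite inE => /andP [uX _].
  rewrite guW andbT; move: uX; rewrite inE (bip _ _ ugu).
  by case: (g u \in X).
have c1 := subset_leq_card fL; rewrite (card_in_imset fi) in c1.
have c2 := subset_leq_card gL; rewrite (card_in_imset gi) in c2.
have fim : f @: (X :&: W) = ~: X :&: W.
  by apply/eqP; rewrite eqEcard fL (card_in_imset fi).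
exists [set [set u; f u] | u in X :&: W]; split.
  move=> e /imsetP [u uL ->]; exists u, (f u).
  have /setIP [ufu fuW] := fN u uL; rewrite in_n in ufu.
  by have /setIP [_ uW] := uL; split.
move=> w wW; case wX: (w \in X).
  have wL : w \in X :&: W by rewrite inE wX wW.
  exists [set w; f w]; split.
    by split; [apply/imsetP; exists w | rewrite in_set2 eqxx].
  move=> e [/imsetP [u uL ->]]; rewrite in_set2 => /orP [/eqP ->|/eqP wfu] //.
  have : f u \in ~: X :&: W by rewrite -fim; apply/imsetP; exists u.
  by rewrite -wfu inE inE wX.
have : w \in f @: (X :&: W) by rewrite fim inE inE wX wW.
case/imsetP => u uL wfu.
exists [set u; f u]; split.
  by split; [apply/imsetP; exists u | rewrite in_set2 wfu eqxx orbT].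
move=> e [/imsetP [u' uL' ->]]; rewrite in_set2 => /orP [/eqP wu'|/eqP wfu'].
  by move: uL'; rewrite -wu' inE wX.
by rewrite (fi u u' uL uL' (etrans (esym wfu) wfu')).
Qed.
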